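(* Let $n\ge 2$ and $w\le n/2$ be positive integers, and let $\pi:\mathbb{Z}\to\mathbb{Z}$ be a bijection with $\pi(i+n)=\pi(i)+n$ for all $i$ and $|\pi(i)-i|\le w$ for all $i$ (equivalently, $\pi$ corresponds to a cyclically banded permutation $\bar\pi\in S_n$ of bandwidth $w$, i.e. $|\bar\pi_i-i|\le w$ or $|\bar\pi_i-i|\ge n-w$ for all $i$). Then $$\pi=\sigma^1\sigma^2\cdots\sigma^{2w-1}S^k,$$ where each $\sigma^i$ is a cyclic permutation of bandwidth $1$ that is a product of pairwise nonadjacent (modulo $n$) periodic simple transpositions, $S$ is the cyclic shift by $1$, and $k$ is an integer with $|k|\le w$.
   Context: For $r\in\mathbb{Z}/n\mathbb{Z}$, the periodic simple transposition $e_r$ (the cyclic analogue of $s_r=(r,r+1)$, with $s_0=s_n$ exchanging positions $n$ and $1$) is the bijection of $\mathbb{Z}$ exchanging $a$ and $a+1$ for every $a\equiv r\pmod n$ and fixing all other integers; $e_r$ and $e_{r'}$ are adjacent modulo $n$ if $r-r'\equiv\pm1\pmod n$. The cyclic shift $S$ is the periodic bijection $i\mapsto i+1$ of $\mathbb{Z}$ (corresponding to the cyclic shift $\pi_1\pi_2\cdots\pi_n\mapsto\pi_2\cdots\pi_n\pi_1$ on $S_n$). A periodic bijection $\rho$ has bandwidth $1$ if $|\rho(i)-i|\le1$ for all $i$. *)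

(* Defs.v *)
From Stdlib Require Import ZArith List.
Import ListNotations.
Open Scope Z_scope.

Definition periodic_bij (n : Z) (f : Z -> Z) : Prop :=
  (forall x y, f x = f y -> x = y) /\
  (forall y, exists x, f x = y) /\
  (forall i, f (i + n) = f i + n).

Definition bandwidth_le (w : Z) (f : Z -> Z) : Prop :=
  forall i, Z.abs (f i - i) <= w.

(* Periodic simple transposition e_r: exchanges a and a+1 for every
   a = r (mod n), fixes all other integers (well defined for n >= 2). *)
Definition per_transp (n r : Z) (a : Z) : Z :=
  if Z.eqb (a mod n) (r mod n) then a + 1
  else if Z.eqb ((a - 1) mod n) (r mod n) then a - 1
  else a.

Definition adjacent_mod (n r r' : Z) : Prop :=
  (r - r' - 1) mod n = 0 \/ (r - r' + 1) mod n = 0.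

Definition nonadj_family (n : Z) (rs : list Z) : Prop :=
  NoDup (map (fun r => r mod n) rs) /\
  (forall r r', In r rs -> In r' rs -> ~ adjacent_mod n r r').

Definition prod_transp (n : Z) (rs : list Z) : Z -> Z :=
  fold_right (fun r f => fun a => per_transp n r (f a)) (fun a => a) rs.

Definition compose_list (fs : list (Z -> Z)) : Z -> Z :=
  fold_right (fun g f => fun a => g (f a)) (fun a => a) fs.

Definition shift_pow (k : Z) (i : Z) : Z := i + k.

(* Main.v *)
Require Import Defs.
From Stdlib Require Import ZArith List Lia Classical ClassicalEpsilon.
Import ListNotations.
Open Scope Z_scope.


Definition drop (A : Z -> Z) (p q : Z) : Z := 2 * (A p - A q) + (q - p).
Definition Iinv (A : Z -> Z) (M : Z) : Prop := forall p q, p < q -> drop A p q <= M.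
Definition MP (A : Z -> Z) (M p q : Z) : Prop := p < q /\ drop A p q = M.
Definition CM (A : Z -> Z) (M r : Z) : Prop :=
  (exists q, MP A M r q) \/ (exists p, MP A M p (r + 1)).
Definition NP (A : Z -> Z) (M r : Z) : Prop :=
  exists q, r < q /\ drop A r q = M - 1 /\ ~ CM A M r /\ ~ CM A M (q - 1).
Definition Cs (A : Z -> Z) (M r : Z) : Prop := CM A M r \/ NP A M r.

Lemma V1 (A : Z -> Z) (M m r : Z) :
  (forall x y, A x = A y -> x = y) -> Iinv A M -> M = 2*m+1 -> 1 <= m ->
  Cs A M r -> A (r+1) < A r.
Proof.
  intros Hinj HI HM Hm HC.
  assert (Hne : A (r+1) <> A r) by (intro E; apply Hinj in E; lia).
  unfold Iinv, drop in HI.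
  destruct HC as [[[q [Hq Hd]] | [p [Hp Hd]]] | [q [Hq [Hd [HnC1 HnC2]]]]]; unfold drop in Hd.
  - destruct (Z.eq_dec q (r+1)) as [->|Hq'].
    + lia.
    + specialize (HI (r+1) q ltac:(lia)). lia.
  - destruct (Z.eq_dec p r) as [->|Hp'].
    + lia.
    + specialize (HI p r ltac:(lia)). lia.
  - destruct (Z.eq_dec q (r+1)) as [->|Hq'].
    + lia.
    + destruct (Z_lt_le_dec (A r) (A (r+1))) as [Hlt|Hle].
      * exfalso. apply HnC2. right. exists (r+1). unfold MP, drop.
        specialize (HI (r+1) q ltac:(lia)). replace (q - 1 + 1) with q by lia. split; lia.
      * lia.
Qed.

Lemma NO (A : Z -> Z) (M m r : Z) :
  (forall x y, A x = A y -> x = y) -> Iinv A M -> M = 2*m+1 -> 1 <= m ->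
  Cs A M r -> Cs A M (r+1) -> False.
Proof.
  intros Hinj HI HM Hm H1 H2.
  pose proof (V1 A M m r Hinj HI HM Hm H1) as E1.
  pose proof (V1 A M m (r+1) Hinj HI HM Hm H2) as E2.
  replace (r + 1 + 1) with (r+2) in E2 by lia.
  unfold Iinv, drop in HI.
  assert (HI2 := HI r (r+2) ltac:(lia)).
  destruct H1 as [[[q [Hq Hd]] | [p [Hp Hd]]] | [q [Hq [Hd [HnC1 HnC2]]]]];
  destruct H2 as [[[q' [Hq' Hd']] | [p' [Hp' Hd']]] | [q' [Hq' [Hd' [HnC1' HnC2']]]]];
  unfold drop in Hd, Hd'.
  - specialize (HI r q' ltac:(lia)). lia.
  - replace (r + 1 + 1) with (r+2) in Hd' by lia.
    destruct (Z.eq_dec q (r+1)) as [->|N1]; [lia|].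
    destruct (Z.eq_dec q (r+2)) as [->|N2]; [lia|].
    destruct (Z.eq_dec p' (r+1)) as [->|N3]; [lia|].
    destruct (Z.eq_dec p' r) as [->|N4]; [lia|].
    specialize (HI p' q ltac:(lia)). lia.
  - specialize (HI r q' ltac:(lia)). lia.
  - specialize (HI p q' ltac:(lia)). lia.
  - replace (r + 1 + 1) with (r+2) in Hd' by lia.
    specialize (HI p (r+2) ltac:(lia)). lia.
  - specialize (HI p q' ltac:(lia)). lia.
  - specialize (HI r q' ltac:(lia)). lia.
  - replace (r + 1 + 1) with (r+2) in Hd' by lia.
    destruct (Z.eq_dec p' (r+1)) as [->|N3]; [lia|].
    destruct (Z.eq_dec p' r) as [->|N4]; [lia|].
    destruct (Z.eq_dec q (r+1)) as [->|N1]; [lia|].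
    destruct (Z.eq_dec q (r+2)) as [->|N2].
    + apply HnC2. right. exists p'. unfold MP, drop. replace (r + 2 - 1 + 1) with (r+2) by lia.
      split; lia.
    + specialize (HI p' q ltac:(lia)).
      apply HnC2. right. exists p'. unfold MP, drop. replace (q - 1 + 1) with q by lia.
      split; lia.
  - specialize (HI r q' ltac:(lia)). lia.
Qed.

Lemma Cov1 A M p q : p < q -> drop A p q = M -> Cs A M p /\ Cs A M (q-1).
Proof.
  intros Hpq Hd. split; left; [left; exists q | right; exists p]; unfold MP;
  try replace (q-1+1) with q by lia; auto.
Qed.

Lemma Cov2 A M p q : p < q -> drop A p q = M - 1 -> Cs A M p \/ Cs A M (q-1).
Proof.
  intros Hpq Hd. destruct (classic (CM A M p)) as [H1|H1]; [left; left; exact H1|].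
  destruct (classic (CM A M (q-1))) as [H2|H2]; [right; left; exact H2|].
  left; right. exists q. auto.
Qed.



Lemma Lfacts (A L : Z -> Z) (M m : Z) :
  (forall x y, A x = A y -> x = y) -> Iinv A M -> M = 2*m+1 -> 1 <= m ->
  (forall x, Cs A M x -> L x = x + 1) ->
  (forall x, Cs A M (x-1) -> L x = x - 1) ->
  (forall x, ~ Cs A M x -> ~ Cs A M (x-1) -> L x = x) ->
  (forall x, L x = x + 1 \/ L x = x - 1 \/ L x = x) /\
  (forall x, L x = x - 1 -> A x < A (x-1)) /\
  (forall x, L x = x + 1 -> A (x+1) < A x) /\
  (forall x, L (L x) = x).
Proof.
  intros Hinj HI HM Hm HL1 HL2 HL3.
  split; [|split; [|split]].
  - intro x. destruct (classic (Cs A M x)) as [C|C]; [left; auto|].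
    destruct (classic (Cs A M (x-1))) as [C'|C']; [right; left; auto| right; right; auto].
  - intros x Hx. destruct (classic (Cs A M (x-1))) as [C|C].
    + pose proof (V1 A M m (x-1) Hinj HI HM Hm C) as V. replace (x-1+1) with x in V by lia. exact V.
    + destruct (classic (Cs A M x)) as [C'|C'].
      * rewrite (HL1 x C') in Hx. lia.
      * rewrite (HL3 x C' C) in Hx. lia.
  - intros x Hx. destruct (classic (Cs A M x)) as [C|C].
    + exact (V1 A M m x Hinj HI HM Hm C).
    + destruct (classic (Cs A M (x-1))) as [C'|C'].
      * rewrite (HL2 x C') in Hx. lia.
      * rewrite (HL3 x C C') in Hx. lia.
  - intro x. destruct (classic (Cs A M x)) as [C|C].
    + rewrite (HL1 x C). rewrite HL2; [lia|]. replace (x+1-1) with x by lia. exact C.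
    + destruct (classic (Cs A M (x-1))) as [C'|C'].
      * rewrite (HL2 x C'). apply HL1 in C'. replace (x - 1 + 1) with x in C' by lia. exact C'.
      * rewrite (HL3 x C C'). apply HL3; assumption.
Qed.

Lemma step_pair (A L : Z -> Z) (M m : Z) :
  (forall x y, A x = A y -> x = y) -> Iinv A M -> M = 2*m+1 -> 1 <= m ->
  (forall x, Cs A M x -> L x = x + 1) ->
  (forall x, Cs A M (x-1) -> L x = x - 1) ->
  (forall x, ~ Cs A M x -> ~ Cs A M (x-1) -> L x = x) ->
  forall p q, L p < L q -> 2 * (A p - A q) + (L q - L p) <= M - 2.
Proof.
  intros Hinj HI HM Hm HL1 HL2 HL3 p q Hlt.
  destruct (Lfacts A L M m Hinj HI HM Hm HL1 HL2 HL3) as [F5 [F3 [F4 _]]].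
  assert (F1 : p < q -> 2 * (A p - A q) + (q - p) = M -> L p = p + 1 /\ L q = q - 1).
  { intros Hpq E. destruct (Cov1 A M p q Hpq E) as [C1 C2]. split; auto. }
  assert (F2 : p < q -> 2 * (A p - A q) + (q - p) = M - 1 -> L p = p + 1 \/ L q = q - 1).
  { intros Hpq E. destruct (Cov2 A M p q Hpq E) as [C1|C2]; [left|right]; auto. }
  unfold Iinv, drop in HI.
  destruct (Z.lt_trichotomy p q) as [Hpq|[Hpq|Hpq]].
  - pose proof (HI p q Hpq) as H0.
    destruct (F5 p) as [Ep|[Ep|Ep]]; destruct (F5 q) as [Eq|[Eq|Eq]]; rewrite ?Ep, ?Eq in *;
    try (pose proof (F3 p Ep)); try (pose proof (F4 q Eq));
    try (pose proof (HI (p-1) q ltac:(lia)));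
    try (pose proof (HI p (q+1) ltac:(lia)));
    try (pose proof (HI (p-1) (q+1) ltac:(lia)));
    (destruct (Z.eq_dec (2 * (A p - A q) + (q - p)) M) as [E|E];
      [destruct (F1 Hpq E); lia|]);
    (destruct (Z.eq_dec (2 * (A p - A q) + (q - p)) (M-1)) as [E'|E'];
      [destruct (F2 Hpq E'); lia|]);
    lia.
  - subst. lia.
  - destruct (F5 p) as [Ep|[Ep|Ep]]; destruct (F5 q) as [Eq|[Eq|Eq]]; try lia.
    assert (p = q + 1) by lia. subst p. pose proof (F4 q Eq). lia.
Qed.


Definition Inv (n w : Z) (A : Z -> Z) (M : Z) : Prop :=
  (forall x y, A x = A y -> x = y) /\ (forall y, exists x, A x = y) /\
  (forall p, A (p + n) = A p + n) /\ (forall p, Z.abs (A p - p) <= w) /\ Iinv A M.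

Lemma Inv_ext n w A B M : (forall x, B x = A x) -> Inv n w A M -> Inv n w B M.
Proof.
  intros HB [H1 [H2 [H3 [H4 H5]]]]. repeat split.
  - intros x y E. rewrite !HB in E. auto.
  - intro y. destruct (H2 y) as [x Hx]. exists x. rewrite HB. auto.
  - intro p. rewrite !HB. auto.
  - intro p. rewrite HB. auto.
  - intros p q Hpq. unfold drop. rewrite !HB. apply H5. auto.
Qed.

Lemma Inv_step_abstract (n w : Z) (A L : Z -> Z) (M m : Z) :
  M = 2*m+1 -> 1 <= m -> Inv n w A M ->
  (forall x, Cs A M x -> L x = x + 1) ->
  (forall x, Cs A M (x-1) -> L x = x - 1) ->
  (forall x, ~ Cs A M x -> ~ Cs A M (x-1) -> L x = x) ->
  (forall x, L (x + n) = L x + n) ->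
  Inv n w (fun x => A (L x)) (M-2).
Proof.
  intros HM Hm [Hinj [Hsurj [Hper [Hwin HI]]]] HL1 HL2 HL3 HLper.
  destruct (Lfacts A L M m Hinj HI HM Hm HL1 HL2 HL3) as [F5 [F3 [F4 Finv]]].
  repeat split.
  - intros x y E. apply Hinj in E. rewrite <- (Finv x), <- (Finv y), E. reflexivity.
  - intro y. destruct (Hsurj y) as [x Hx]. exists (L x). rewrite Finv. auto.
  - intro p. rewrite HLper. apply Hper.
  - intro p. pose proof (Hwin p). destruct (F5 p) as [E|[E|E]]; rewrite E.
    + pose proof (F4 p E). pose proof (Hwin (p+1)). lia.
    + pose proof (F3 p E). pose proof (Hwin (p-1)). lia.
    + lia.
  - intros p q Hpq. unfold drop.
    pose proof (step_pair A L M m Hinj HI HM Hm HL1 HL2 HL3 (L p) (L q)) as S.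
    rewrite !Finv in S. specialize (S Hpq). lia.
Qed.


Lemma prod_transp_cons n r rs a : prod_transp n (r :: rs) a = per_transp n r (prod_transp n rs a).
Proof. reflexivity. Qed.

Lemma mod_succ n a : 2 <= n -> ((a mod n) + 1) mod n = (a + 1) mod n.
Proof. intros. apply Z.add_mod_idemp_l. lia. Qed.

Lemma mod_pred_neq n a : 2 <= n -> (a - 1) mod n <> a mod n.
Proof.
  intros Hn E.
  pose proof (Z.div_mod a n ltac:(lia)) as D1.
  pose proof (Z.div_mod (a-1) n ltac:(lia)) as D2.
  pose proof (Z.mod_pos_bound a n ltac:(lia)).
  pose proof (Z.mod_pos_bound (a-1) n ltac:(lia)).
  assert (HH : n * (a / n) - n * ((a - 1) / n) = 1) by lia.
  rewrite <- Z.mul_sub_distr_l in HH.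
  remember (a / n - (a - 1) / n) as k.
  destruct (Z_le_gt_dec k 0); nia.
Qed.

Lemma PT n rs : 2 <= n ->
  (forall r, In r rs -> 0 <= r < n) -> NoDup rs ->
  (forall r r', In r rs -> In r' rs -> (r + 1) mod n <> r') ->
  forall a,
  (In (a mod n) rs -> prod_transp n rs a = a + 1) /\
  (In ((a-1) mod n) rs -> prod_transp n rs a = a - 1) /\
  (~ In (a mod n) rs -> ~ In ((a-1) mod n) rs -> prod_transp n rs a = a).
Proof.
  intros Hn. induction rs as [|r rs IH]; intros Hrange Hnd Hadj a.
  - simpl. split; [tauto|split; [tauto|auto]].
  - inversion Hnd as [|? ? Hnotin Hnd']; subst.
    assert (Hr : 0 <= r < n) by (apply Hrange; left; auto).
    assert (IH' := IH (fun x H => Hrange x (or_intror H)) Hnd'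
                      (fun x y H1 H2 => Hadj x y (or_intror H1) (or_intror H2))).
    assert (Hrm : r mod n = r) by (apply Z.mod_small; auto).
    rewrite prod_transp_cons. unfold per_transp. rewrite Hrm.
    pose proof (mod_succ n a Hn) as MS.
    pose proof (mod_succ n (a-1) Hn) as MS'. replace (a - 1 + 1) with a in MS' by lia.
    pose proof (mod_succ n (a-1-1) Hn) as MS''. replace (a - 1 - 1 + 1) with (a-1) in MS'' by lia.
    pose proof (mod_pred_neq n a Hn) as MN.
    split; [|split].
    + intros [E|E].
      *
        subst r.
        assert (N2 : ~ In ((a-1) mod n) rs).
        { intro H. apply (Hadj ((a-1) mod n) (a mod n) (or_intror H) (or_introl eq_refl)). rewrite MS'. auto. }
        destruct (IH' a) as [_ [_ H3]]. rewrite (H3 Hnotin N2).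
        rewrite Z.eqb_refl. auto.
      * destruct (IH' a) as [H1 _]. rewrite (H1 E).
        assert (E1 : (a + 1) mod n <> r).
        { intro E2. apply (Hadj (a mod n) r (or_intror E) (or_introl eq_refl)). rewrite MS. auto. }
        assert (E2 : a mod n <> r) by (intro E3; apply Hnotin; rewrite <- E3; auto).
        destruct (Z.eqb_spec ((a+1) mod n) r); [contradiction|].
        replace (a + 1 - 1) with a by lia.
        destruct (Z.eqb_spec (a mod n) r); [contradiction|]. auto.
    + intros [E|E].
      * subst r.
        assert (N1 : ~ In (a mod n) ((a-1) mod n :: rs)).
        { intro H. apply (Hadj ((a-1) mod n) (a mod n) (or_introl eq_refl) H). rewrite MS'. auto. }
        destruct (IH' a) as [_ [_ H3]]. rewrite (H3 (fun H => N1 (or_intror H)) Hnotin).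
        destruct (Z.eqb_spec (a mod n) ((a-1) mod n)) as [E'|E'].
        { exfalso. apply MN. auto. }
        rewrite Z.eqb_refl. auto.
      * destruct (IH' a) as [_ [H2 _]]. rewrite (H2 E).
        assert (E1 : (a - 1) mod n <> r) by (intro E3; apply Hnotin; rewrite <- E3; auto).
        assert (E2 : (a - 1 - 1) mod n <> r).
        { intro E3. apply (Hadj r ((a-1) mod n) (or_introl eq_refl) (or_intror E)). rewrite <- E3, MS''. auto. }
        destruct (Z.eqb_spec ((a-1) mod n) r); [contradiction|].
        destruct (Z.eqb_spec ((a-1-1) mod n) r); [contradiction|]. auto.
    + intros N1 N2.
      destruct (IH' a) as [_ [_ H3]].
      rewrite (H3 (fun H => N1 (or_intror H)) (fun H => N2 (or_intror H))).
      destruct (Z.eqb_spec (a mod n) r) as [E|E]; [exfalso; apply N1; left; auto|].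
      destruct (Z.eqb_spec ((a-1) mod n) r) as [E'|E']; [exfalso; apply N2; left; auto|].
      auto.
Qed.


Definition Zrange (n : Z) : list Z := map Z.of_nat (seq 0 (Z.to_nat n)).

Lemma Zrange_In n x : 0 <= n -> (In x (Zrange n) <-> 0 <= x < n).
Proof.
  intros Hn. unfold Zrange. rewrite in_map_iff. split.
  - intros [k [Hk Hin]]. apply in_seq in Hin. lia.
  - intros Hx. exists (Z.to_nat x). split; [lia|]. apply in_seq. lia.
Qed.

Lemma Zrange_NoDup n : NoDup (Zrange n).
Proof.
  unfold Zrange. apply NoDup_map_NoDup_ForallPairs; [|apply seq_NoDup].
  intros x y _ _ H. lia.
Qed.

Definition cfilter (P : Z -> Prop) (l : list Z) : list Z :=
  filter (fun x => if excluded_middle_informative (P x) then true else false) l.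

Lemma cfilter_In P l x : In x (cfilter P l) <-> In x l /\ P x.
Proof.
  unfold cfilter. rewrite filter_In.
  destruct (excluded_middle_informative (P x)); split; intros [H1 H2]; auto; try discriminate;
  try contradiction.
Qed.

Lemma mod_zero_shift n a b : 2 <= n -> (a - b - 1) mod n = 0 -> 0 <= a < n -> (b + 1) mod n = a.
Proof.
  intros Hn H Ha.
  pose proof (Z.div_mod (a - b - 1) n ltac:(lia)) as D. rewrite H in D.
  replace (b + 1) with (a + (- ((a - b - 1) / n)) * n) by lia.
  rewrite Z_mod_plus_full. apply Z.mod_small. auto.
Qed.

Lemma layer_exists (n : Z) (P : Z -> Prop) :
  2 <= n -> (forall x, P x <-> P (x mod n)) -> (forall x, P x -> P (x+1) -> False) ->
  exists rs,
    (nonadj_family n rs /\ periodic_bij n (prod_transp n rs) /\ bandwidth_le 1 (prod_transp n rs)) /\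
    (forall a, P a -> prod_transp n rs a = a + 1) /\
    (forall a, P (a-1) -> prod_transp n rs a = a - 1) /\
    (forall a, ~ P a -> ~ P (a-1) -> prod_transp n rs a = a).
Proof.
  intros Hn Hmod Hno.
  set (rs := cfilter P (Zrange n)).
  assert (Hin : forall x, In x rs <-> 0 <= x < n /\ P x).
  { intro x. unfold rs. rewrite cfilter_In, Zrange_In by lia. tauto. }
  assert (Hinmod : forall a, In (a mod n) rs <-> P a).
  { intro a. rewrite Hin. rewrite (Hmod a). split; [tauto|].
    intro H. split; [apply Z.mod_pos_bound; lia|auto]. }
  assert (Hrange : forall r, In r rs -> 0 <= r < n) by (intros r H; apply Hin in H; tauto).
  assert (Hnd : NoDup rs) by (apply NoDup_filter, Zrange_NoDup).
  assert (Hadj : forall r r', In r rs -> In r' rs -> (r + 1) mod n <> r').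
  { intros r r' H1 H2 E. apply Hin in H1. apply Hin in H2. subst r'.
    destruct H1 as [_ H1]. destruct H2 as [_ H2]. rewrite <- Hmod in H2. eauto. }
  pose proof (PT n rs Hn Hrange Hnd Hadj) as Hspec.
  set (L := prod_transp n rs).
  assert (HL1 : forall a, P a -> L a = a + 1).
  { intros a Ha. apply (proj1 (Hspec a)). apply Hinmod. auto. }
  assert (HL2 : forall a, P (a-1) -> L a = a - 1).
  { intros a Ha. apply (proj1 (proj2 (Hspec a))). apply Hinmod. auto. }
  assert (HL3 : forall a, ~ P a -> ~ P (a-1) -> L a = a).
  { intros a H1 H2. apply (proj2 (proj2 (Hspec a))); rewrite Hinmod; auto. }
  assert (F5 : forall a, (P a /\ L a = a + 1) \/ (P (a-1) /\ L a = a - 1) \/ (~P a /\ ~P (a-1) /\ L a = a)).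
  { intro a. destruct (classic (P a)) as [H|H]; [left; auto|].
    destruct (classic (P (a-1))) as [H'|H']; [right; left; auto|right; right; auto]. }
  assert (Hinv : forall a, L (L a) = a).
  { intro a. destruct (F5 a) as [[H E]|[[H E]|[H [H' E]]]]; rewrite E.
    - rewrite HL2; [lia|]. replace (a + 1 - 1) with a by lia. auto.
    - rewrite HL1; [lia|]. auto.
    - rewrite E. auto. }
  assert (Pper : forall a, P (a + n) <-> P a).
  { intro a. rewrite (Hmod (a+n)), (Hmod a). replace (a + n) with (a + 1 * n) by lia.
    rewrite Z_mod_plus_full. tauto. }
  exists rs. split; [split; [|split]|split; [|split]]; auto.
  - split.
    + replace (map (fun r => r mod n) rs) with rs; auto.
      rewrite <- (map_id rs) at 1. apply map_ext_in. intros r Hr.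
      symmetry. apply Z.mod_small. auto.
    + intros r r' H1 H2 [E|E].
      * apply (Hadj r' r H2 H1). apply mod_zero_shift; auto.
      * apply (Hadj r r' H1 H2). apply mod_zero_shift; auto.
        replace (r' - r - 1) with (- (r - r' + 1)) by lia.
        rewrite Z.mod_opp_l_z; auto; lia.
  - split; [|split].
    + intros x y E. rewrite <- (Hinv x), <- (Hinv y). fold L in E. rewrite E. auto.
    + intro y. exists (L y). fold L. auto.
    + intro i. fold L. destruct (F5 i) as [[H E]|[[H E]|[H [H' E]]]]; rewrite E.
      * rewrite HL1; [lia|]. apply Pper. auto.
      * rewrite HL2; [lia|]. replace (i + n - 1) with (i - 1 + n) by lia. apply Pper. auto.
      * apply HL3.
        -- rewrite Pper. auto.
        -- replace (i + n - 1) with (i - 1 + n) by lia. rewrite Pper. auto.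
  - intro i. fold L. destruct (F5 i) as [[H E]|[[H E]|[H [H' E]]]]; rewrite E; lia.
Qed.


Lemma A_shift_nat (A : Z -> Z) n : (forall p, A (p + n) = A p + n) ->
  forall (k : nat) p, A (p + Z.of_nat k * n) = A p + Z.of_nat k * n.
Proof.
  intros Hper k. induction k as [|k IH]; intro p.
  - simpl. rewrite Z.add_0_r. lia.
  - rewrite Nat2Z.inj_succ. replace (p + Z.succ (Z.of_nat k) * n) with (p + Z.of_nat k * n + n) by lia.
    rewrite Hper, IH. lia.
Qed.

Lemma A_shift (A : Z -> Z) n : (forall p, A (p + n) = A p + n) ->
  forall k p, A (p + k * n) = A p + k * n.
Proof.
  intros Hper k p. destruct (Z_le_gt_dec 0 k) as [Hk|Hk].
  - rewrite <- (Z2Nat.id k Hk). apply A_shift_nat. auto.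
  - pose proof (A_shift_nat A n Hper (Z.to_nat (-k)) (p + k * n)) as H.
    rewrite Z2Nat.id in H by lia.
    replace (p + k * n + - k * n) with p in H by lia. lia.
Qed.

Lemma CM_shift (A : Z -> Z) M c : (forall p, A (p + c) = A p + c) ->
  forall x, CM A M x -> CM A M (x + c).
Proof.
  intros Hs x [[q [Hq Hd]]|[p [Hp Hd]]]; unfold drop in Hd.
  - left. exists (q + c). unfold MP, drop. rewrite !Hs. split; lia.
  - right. exists (p + c). unfold MP, drop. replace (x + c + 1) with (x + 1 + c) by lia.
    rewrite !Hs. split; lia.
Qed.

Lemma Cs_shift (A : Z -> Z) M c : (forall p, A (p + c) = A p + c) ->
  forall x, Cs A M x -> Cs A M (x + c).
Proof.
  intros Hs.
  assert (Hs' : forall p, A (p + - c) = A p + - c).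
  { intro p. pose proof (Hs (p + - c)). replace (p + - c + c) with p in H by lia. lia. }
  assert (back : forall y, CM A M (y + c) -> CM A M y).
  { intros y H. apply (CM_shift A M (-c) Hs') in H. replace (y + c + - c) with y in H by lia. auto. }
  intros x [H|[q [Hq [Hd [N1 N2]]]]].
  - left. apply CM_shift; auto.
  - right. exists (q + c). unfold drop in *. rewrite !Hs. repeat split; try lia.
    + intro H. apply N1. apply back. auto.
    + intro H. apply N2. apply back. replace (q - 1 + c) with (q + c - 1) by lia. auto.
Qed.

Definition good (n : Z) (rs : list Z) : Prop :=
  nonadj_family n rs /\ periodic_bij n (prod_transp n rs) /\ bandwidth_le 1 (prod_transp n rs).

Lemma step (n w : Z) (A : Z -> Z) (M m : Z) :
  2 <= n -> M = 2*m+1 -> 1 <= m -> Inv n w A M ->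
  exists rs, good n rs /\ Inv n w (fun x => A (prod_transp n rs x)) (M - 2).
Proof.
  intros Hn HM Hm HInv.
  pose proof HInv as [Hinj [Hsurj [Hper [Hwin HI]]]].
  assert (Hmod : forall x, Cs A M x <-> Cs A M (x mod n)).
  { intro x. pose proof (Z.div_mod x n ltac:(lia)) as D.
    assert (Hk : forall p, A (p + (x / n) * n) = A p + (x / n) * n) by (intro; apply A_shift; auto).
    assert (Hk' : forall p, A (p + (- (x / n)) * n) = A p + (- (x / n)) * n) by (intro; apply A_shift; auto).
    split; intro H.
    - apply (Cs_shift A M _ Hk') in H. replace (x + - (x / n) * n) with (x mod n) in H by lia. auto.
    - apply (Cs_shift A M _ Hk) in H. replace (x mod n + x / n * n) with x in H by lia. auto. }
  assert (Hno : forall x, Cs A M x -> Cs A M (x+1) -> False).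
  { intros x H1 H2. exact (NO A M m x Hinj HI HM Hm H1 H2). }
  destruct (layer_exists n (Cs A M) Hn Hmod Hno) as [rs [Hgood [HL1 [HL2 HL3]]]].
  exists rs. split; [exact Hgood|].
  destruct Hgood as [_ [[_ [_ HLper]] _]].
  apply (Inv_step_abstract n w A (prod_transp n rs) M m HM Hm HInv HL1 HL2 HL3 HLper).
Qed.


Lemma compose_list_app (fs : list (Z -> Z)) (g : Z -> Z) x :
  compose_list (fs ++ [g]) x = compose_list fs (g x).
Proof.
  induction fs as [|f fs IH]; simpl; auto.
  unfold compose_list in *. simpl. f_equal. apply IH.
Qed.

Lemma iter n w g : 2 <= n -> 1 <= w -> Inv n w g (4*w - 1) ->
  forall t : nat, Z.of_nat t <= 2*w - 1 ->
  exists rss, length rss = t /\ Forall (good n) rss /\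
    Inv n w (fun x => g (compose_list (map (prod_transp n) rss) x)) (4*w - 1 - 2 * Z.of_nat t).
Proof.
  intros Hn Hw Hg t. induction t as [|t IH]; intro Ht.
  - exists []. split; [auto|split; [auto|]].
    replace (4 * w - 1 - 2 * Z.of_nat 0) with (4*w-1) by lia.
    apply (Inv_ext n w g); auto.
  - destruct IH as [rss [Hlen [Hall HInv]]]; [lia|].
    destruct (step n w _ (4*w - 1 - 2 * Z.of_nat t) (2*w - 1 - Z.of_nat t) Hn ltac:(lia) ltac:(lia) HInv)
      as [rs [Hgood HInv']].
    exists (rss ++ [rs]). split; [rewrite length_app; simpl; lia|split].
    + apply Forall_app. split; auto.
    + replace (4 * w - 1 - 2 * Z.of_nat (S t)) with (4 * w - 1 - 2 * Z.of_nat t - 2) by lia.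
      apply (Inv_ext n w _ _ _ (fun x => eq_refl _) ) in HInv'.
      eapply Inv_ext; [|exact HInv'].
      intro x. simpl. rewrite map_app. simpl. rewrite compose_list_app. reflexivity.
Qed.

Lemma final_transl n w A : Inv n w A 1 -> forall p, A p = A 0 + p.
Proof.
  intros [Hinj [Hsurj [_ [_ HI]]]].
  assert (Hadj : forall p, A p < A (p+1)).
  { intro p. pose proof (HI p (p+1) ltac:(lia)) as H. unfold drop in H.
    assert (A p <> A (p+1)) by (intro E; apply Hinj in E; lia). lia. }
  assert (Hmono : forall (k : nat) p, A p < A (p + Z.of_nat k + 1)).
  { intro k. induction k as [|k IH]; intro p.
    - simpl. replace (p + 0 + 1) with (p+1) by lia. auto.
    - rewrite Nat2Z.inj_succ. pose proof (IH p). pose proof (Hadj (p + Z.of_nat k + 1)).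
      replace (p + Z.succ (Z.of_nat k) + 1) with (p + Z.of_nat k + 1 + 1) by lia. lia. }
  assert (Hmono' : forall p q, p < q -> A p < A q).
  { intros p q Hpq. pose proof (Hmono (Z.to_nat (q - p - 1)) p). rewrite Z2Nat.id in H by lia.
    replace (p + (q - p - 1) + 1) with q in H by lia. auto. }
  assert (Hsucc : forall p, A (p+1) = A p + 1).
  { intro p. destruct (Hsurj (A p + 1)) as [z Hz].
    destruct (Z.lt_trichotomy z (p+1)) as [H|[H|H]].
    - destruct (Z.eq_dec z p) as [->|Hne]; [lia|]. pose proof (Hmono' z p ltac:(lia)). lia.
    - subst. auto.
    - pose proof (Hmono' (p+1) z H). pose proof (Hadj p). lia. }
  intro p. induction p using Z.peano_ind.
  - lia.
  - unfold Z.succ. rewrite Hsucc. lia.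
  - unfold Z.pred. pose proof (Hsucc (p + -1)). replace (p + -1 + 1) with p in H by lia. lia.
Qed.

Theorem theorem3p1 (n w : Z) (pi : Z -> Z)
  (Hn : 2 <= n) (Hw : 1 <= w) (Hwn : 2 * w <= n)
  (Hpi : periodic_bij n pi) (Hband : bandwidth_le w pi) :
  exists (rss : list (list Z)) (k : Z),
    length rss = Z.to_nat (2 * w - 1) /\
    Forall (fun rs =>
              nonadj_family n rs /\
              periodic_bij n (prod_transp n rs) /\
              bandwidth_le 1 (prod_transp n rs)) rss /\
    Z.abs k <= w /\
    (forall i, pi i = compose_list (map (prod_transp n) rss) (shift_pow k i)).
Proof.
  destruct Hpi as [Hinj [Hsurj Hper]].
  set (g := fun y => proj1_sig (constructive_indefinite_description _ (Hsurj y))).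
  assert (Hg : forall y, pi (g y) = y).
  { intro y. unfold g. exact (proj2_sig (constructive_indefinite_description _ (Hsurj y))). }
  assert (Hgpi : forall x, g (pi x) = x) by (intro x; apply Hinj; rewrite Hg; auto).
  assert (HInv0 : Inv n w g (4*w - 1)).
  { repeat split.
    - intros x y E. rewrite <- (Hg x), <- (Hg y), E. auto.
    - intro y. exists (pi y). auto.
    - intro p. apply Hinj. rewrite Hper, !Hg. auto.
    - intro p. pose proof (Hband (g p)). rewrite Hg in H. lia.
    - intros p q Hpq. unfold drop. pose proof (Hband (g p)). pose proof (Hband (g q)).
      rewrite Hg in *. lia. }
  destruct (iter n w g Hn Hw HInv0 (Z.to_nat (2*w-1)) ltac:(lia)) as [rss [Hlen [Hall HInv]]].
  rewrite Z2Nat.id in HInv by lia.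
  replace (4 * w - 1 - 2 * (2 * w - 1)) with 1 in HInv by lia.
  pose proof (final_transl n w _ HInv) as Htr.
  set (K := g (compose_list (map (prod_transp n) rss) 0)) in *.
  exists rss, (-K). split; [auto|split; [exact Hall|split]].
  - destruct HInv as [_ [_ [_ [Hwin _]]]]. specialize (Hwin 0). simpl in Hwin. fold K in Hwin. lia.
  - intro i. unfold shift_pow. specialize (Htr (i + - K)). simpl in Htr.
    replace (K + (i + - K)) with i in Htr by lia.
    rewrite <- (Hg (compose_list (map (prod_transp n) rss) (i + - K))).
    rewrite Htr. reflexivity.
Qed.
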